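(* Let $\sigma=\sigma_1\cdots\sigma_k$ be a planar rooted forest (decorated or not) with connected components $\sigma_j=B^+(\tau_j)$, $j=1,\dots,k$, listed from left to right. Then $$\sigma!=|\sigma_1|\cdot|\sigma_1\sigma_2|\cdots|\sigma_1\cdots\sigma_k|\cdot\tau_1!\cdots\tau_k!,$$ where $|\cdot|$ is the number of vertices and $!$ is the planar factorial.
   Context: Planar rooted forests: finite left-to-right ordered sequences of planar rooted trees; $B^+(\tau)$ is the tree obtained by grafting the trees of the planar forest $\tau$, in order, onto a new common root. On vertices, $v<w$ iff $v\neq w$ and $v$ lies on the path from a root to $w$; $\ll$ is the transitive closure of the relation $R$: $vRw$ iff $v<w$, or $v,w$ are children of a common vertex with $v$ to the right of $w$, or $v,w$ are both roots with $v$ to the right of $w$. For a finite poset $P$ and $s<t$, $\Omega^{st}_P=\{(t_v)\in[s,t]^P: t_v\ge t_w \text{ if } v<w\}$ and $P!$ is defined by $\mathrm{Vol}(\Omega^{st}_P)=(t-s)^{|P|}/P!$. The planar factorial is $\sigma!:=(V(\sigma),\ll)!$, with $\emptyset!=1$. *)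

(* Defs.v *)
From Stdlib Require Import Reals List Arith Relations.
Import ListNotations.
Open Scope R_scope.

(* A finite poset is given by its size n and a strict order [lt] on the
   indices 0..n-1.  A point of Omega_P^{01} is a family (x_v)_v in [0,1]^P with
   x_v >= x_w whenever v < w.  Lattice points at mesh 1/M: lists x of length n
   with entries in {0..M} satisfying the same inequalities. *)
Definition order_points (n : nat) (lt : nat -> nat -> Prop) (M : nat)
  (x : list nat) : Prop :=
  length x = n /\ Forall (fun a => (a <= M)%nat) x /\
  (forall i j, (i < n)%nat -> (j < n)%nat -> lt i j -> (nth j x 0 <= nth i x 0)%nat).

Definition is_card {A : Type} (P : A -> Prop) (c : nat) : Prop :=
  exists l : list A, NoDup l /\ (forall x, In x l <-> P x) /\ length l = c.

(* Volume (Jordan content) of Omega_P^{01} = [0,1]-order polytope: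
   limit of (#lattice points of mesh 1/M) / M^n. *)
Definition order_volume (n : nat) (lt : nat -> nat -> Prop) (v : R) : Prop :=
  exists c : nat -> nat,
    (forall M, is_card (order_points n lt M) (c M)) /\
    Un_cv (fun N => INR (c (S N)) / INR (S N) ^ n) v.

(* P! is defined by Vol(Omega_P^{st}) = (t-s)^|P| / P!; with s=0,t=1. *)
Definition poset_fact (n : nat) (lt : nat -> nat -> Prop) (f : R) : Prop :=
  exists v, order_volume n lt v /\ v <> 0 /\ f = / v.

Inductive ptree : Type := Node : list ptree -> ptree.
(* B^+(tau) = Node tau ; a planar forest is a list ptree (left to right). *)

(* Vertices are addresses: a vertex of a forest is [i; c1; ...; cm] meaning
   the i-th tree, then its c1-th child, etc. (indices from the left). *)
Fixpoint tvert (t : ptree) : list (list nat) :=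
  match t with
  | Node ts =>
      nil :: (fix fv (i : nat) (l : list ptree) : list (list nat) :=
                match l with
                | nil => nil
                | c :: cs => map (cons i) (tvert c) ++ fv (S i) cs
                end) 0%nat ts
  end.

Fixpoint fvaux (i : nat) (l : list ptree) : list (list nat) :=
  match l with
  | nil => nil
  | c :: cs => map (cons i) (tvert c) ++ fvaux (S i) cs
  end.

Definition fverts (sigma : list ptree) : list (list nat) := fvaux 0 sigma.

Definition fsize (sigma : list ptree) : nat := length (fverts sigma).

(* The relation R: v < w (v a proper ancestor of w: a proper prefix), or
   v, w siblings (children of a common vertex, or both roots) with v to the
   right of w. *)
Definition Rrel (v w : list nat) : Prop :=
  (exists u, u <> nil /\ w = v ++ u) \/
  (exists p a b, v = p ++ [a] /\ w = p ++ [b] /\ (b < a)%nat).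

Definition llrel (sigma : list ptree) : list nat -> list nat -> Prop :=
  clos_trans (list nat)
    (fun v w => In v (fverts sigma) /\ In w (fverts sigma) /\ Rrel v w).

Definition forest_lt (sigma : list ptree) (i j : nat) : Prop :=
  llrel sigma (nth i (fverts sigma) nil) (nth j (fverts sigma) nil).

Definition planar_fact (sigma : list ptree) (f : R) : Prop :=
  poset_fact (fsize sigma) (forest_lt sigma) f.

(* Main.v *)
Require Import Defs.
From Stdlib Require Import Reals List Arith Relations Lra Lia.
Import ListNotations.
Open Scope R_scope.

Lemma tvert_Node ts : tvert (Node ts) = [] :: fvaux 0 ts.
Proof.
  reflexivity.
Qed.

Lemma fvaux_app i l t : fvaux i (l ++ [t]) = fvaux i l ++ map (cons (i + length l)%nat) (tvert t).
Proof.
  revert i; induction l as [|a l IH]; intro i; simpl.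
  - now rewrite Nat.add_0_r, app_nil_r.
  - rewrite IH, app_assoc. do 3 f_equal. lia.
Qed.

Lemma fvaux_heads i l v : In v (fvaux i l) -> exists j u, v = j :: u /\ (i <= j < i + length l)%nat.
Proof.
  revert i; induction l as [|a l IH]; intro i; simpl; [tauto|].
  intro H; apply in_app_or in H as [H|H].
  - apply in_map_iff in H as [u [<- _]]. exists i, u; split; auto; lia.
  - destruct (IH _ H) as [j [u [E Hj]]]. exists j, u; split; auto; lia.
Qed.

Lemma fvaux_root i l j : (j < length l)%nat -> In [(i + j)%nat] (fvaux i l).
Proof.
  revert i j; induction l as [|a l IH]; intros i j Hj; simpl in *; [lia|].
  apply in_or_app. destruct j as [|j].
  - left. rewrite Nat.add_0_r. destruct a. rewrite tvert_Node. simpl; auto.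
  - right. replace (i + S j)%nat with (S i + j)%nat by lia. apply IH. lia.
Qed.

Lemma fverts_nonnil s u : In u (fverts s) -> u <> [].
Proof. intro H. destruct (fvaux_heads _ _ _ H) as [j [w [-> _]]]; discriminate. Qed.

Lemma Rrel_nil_r u : ~ Rrel u [].
Proof.
  intros [[t [Ht E]]|[p [a [b [_ [E _]]]]]].
  - destruct u, t; simpl in E; try discriminate; congruence.
  - destruct p; discriminate.
Qed.

Lemma Rrel_head j u k u' : Rrel (j :: u) (k :: u') ->
  (j = k /\ Rrel u u') \/ (u = [] /\ u' = [] /\ (k < j)%nat).
Proof.
  intros [[t [Ht E]]|[p [a [b [E1 [E2 Hab]]]]]].
  - simpl in E. injection E as -> ->. left; split; auto. left; eauto.
  - destruct p as [|h p]; simpl in *.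
    + injection E1 as -> ->. injection E2 as -> ->. right; auto.
    + injection E1 as -> ->. injection E2 as -> ->. left; split; auto.
      right. eauto 10.
Qed.

Lemma Rrel_cons c u u' : Rrel u u' -> Rrel (c :: u) (c :: u').
Proof.
  intros [[t [Ht E]]|[p [a [b [E1 [E2 Hab]]]]]].
  - left. exists t; split; auto. subst; auto.
  - right. exists (c :: p), a, b. subst. auto.
Qed.

Lemma llrel_in s v w : llrel s v w -> In v (fverts s) /\ In w (fverts s).
Proof.
  induction 1 as [x y H|x y z _ [H1 _] _ [_ H2]]; tauto.
Qed.
Open Scope R_scope.

Lemma fverts_snoc s ts :
  fverts (s ++ [Node ts]) = fverts s ++ [length s] :: map (cons (length s)) (fverts ts).
Proof. unfold fverts. rewrite fvaux_app, tvert_Node. reflexivity. Qed.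

Lemma in_snoc s ts v : In v (fverts (s ++ [Node ts])) <->
  In v (fverts s) \/ v = [length s] \/ exists u, v = length s :: u /\ In u (fverts ts).
Proof.
  rewrite fverts_snoc, in_app_iff. simpl. rewrite in_map_iff.
  split; intros [H|[H|H]]; auto.
  - right; right. destruct H as [u [<- Hu]]; eauto.
  - right; right. destruct H as [u [-> Hu]]; eauto.
Qed.

Lemma head_s s v : In v (fverts s) -> exists j u, v = j :: u /\ (j < length s)%nat.
Proof. intro H. destruct (fvaux_heads _ _ _ H) as [j [u [E Hj]]]. exists j, u; split; auto; lia. Qed.

Lemma F1 s ts v w : llrel s v w -> llrel (s ++ [Node ts]) v w.
Proof.
  induction 1 as [x y [H1 [H2 H3]]|x y z _ IH1 _ IH2].
  - apply t_step. rewrite !in_snoc. auto.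
  - eapply t_trans; eauto.
Qed.

Lemma F2 s ts u u' : llrel ts u u' -> llrel (s ++ [Node ts]) (length s :: u) (length s :: u').
Proof.
  induction 1 as [x y [H1 [H2 H3]]|x y z _ IH1 _ IH2].
  - apply t_step. rewrite !in_snoc. split; [eauto|split; [eauto|]]. now apply Rrel_cons.
  - eapply t_trans; eauto.
Qed.

Lemma F3 s ts w : In w (fverts (s ++ [Node ts])) -> w <> [length s] ->
  llrel (s ++ [Node ts]) [length s] w.
Proof.
  intros Hw Hne. pose proof Hw as Hw'. rewrite in_snoc in Hw'.
  assert (Hr : In [length s] (fverts (s ++ [Node ts]))) by (rewrite in_snoc; auto).
  destruct Hw' as [H|[H|[u [-> Hu]]]]; [|contradiction|].
  - destruct (head_s _ _ H) as [j [u [-> Hj]]].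
    assert (Hj' : In [j] (fverts (s ++ [Node ts]))).
    { rewrite in_snoc; left. apply (fvaux_root 0 s j Hj). }
    assert (R1 : llrel (s ++ [Node ts]) [length s] [j]).
    { apply t_step. split; auto. split; auto. right. exists [], (length s), j. auto. }
    destruct u as [|x u]; auto.
    eapply t_trans; [exact R1|]. apply t_step. split; auto. split; auto.
    left. exists (x :: u). split; [discriminate|reflexivity].
  - apply t_step. split; auto. split; auto. left. exists u. split; auto.
    eapply fverts_nonnil; eauto.
Qed.

Lemma step_class s ts v y : In v (fverts (s ++ [Node ts])) -> In y (fverts (s ++ [Node ts])) -> Rrel v y ->
  v = [length s] \/ (In v (fverts s) /\ In y (fverts s) /\ Rrel v y) \/
  (exists u u', v = length s :: u /\ y = length s :: u' /\ In u (fverts ts) /\ In u' (fverts ts) /\ Rrel u u').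
Proof.
  rewrite !in_snoc. intros Hv Hy HR.
  destruct Hv as [Hv|[Hv|[u [-> Hu]]]]; auto.
  - destruct (head_s _ _ Hv) as [j [u [-> Hj]]].
    destruct Hy as [Hy|[->|[u' [-> Hu']]]]; auto.
    + apply Rrel_head in HR. lia.
    + apply Rrel_head in HR. lia.
  - pose proof (fverts_nonnil _ _ Hu) as Hun.
    destruct Hy as [Hy|[->|[u' [-> Hu']]]].
    + destruct (head_s _ _ Hy) as [j [u' [-> Hj]]].
      apply Rrel_head in HR. destruct HR as [[E _]|[E _]]; [lia|contradiction].
    + apply Rrel_head in HR. destruct HR as [[_ E]|[E _]]; [now apply Rrel_nil_r in E|contradiction].
    + apply Rrel_head in HR. destruct HR as [[_ E]|[E _]]; [|contradiction].
      right; right; eauto 10.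
Qed.

Lemma F4 s ts v w : llrel (s ++ [Node ts]) v w ->
  v = [length s] \/ (In v (fverts s) /\ In w (fverts s) /\ llrel s v w) \/
  (exists u u', v = length s :: u /\ w = length s :: u' /\ llrel ts u u').
Proof.
  unfold llrel at 1. intro H. apply clos_trans_t1n in H.
  induction H as [x y [H1 [H2 H3]]|x y z [H1 [H2 H3]] _ IH].
  - destruct (step_class _ _ _ _ H1 H2 H3) as [E|[[A [B C]]|[u [u' [E1 [E2 [A [B C]]]]]]]]; auto.
    + right; left. split; auto. split; auto. apply t_step; auto.
    + right; right. exists u, u'. split; auto. split; auto. apply t_step; auto.
  - destruct (step_class _ _ _ _ H1 H2 H3) as [E|[[A [B C]]|[u [u' [E1 [E2 [A [B C]]]]]]]]; auto.
    + right; left. split; auto.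
      destruct IH as [E|[[A' [B' C']]|[u [u' [E1 [E2 _]]]]]].
      * subst. destruct (head_s _ _ B) as [j [u [E Hj]]]. injection E; lia.
      * split; auto. eapply t_trans; [apply t_step; eauto|exact C'].
      * subst. destruct (head_s _ _ B) as [j [u0 [E Hj]]]. injection E; lia.
    + right; right.
      destruct IH as [E|[[A' [B' C']]|[u0 [u0' [E1' [E2' C']]]]]].
      * subst. injection E2 as E2. subst u'. now apply fverts_nonnil in B.
      * subst. destruct (head_s _ _ A') as [j [u0 [E Hj]]]. injection E; lia.
      * rewrite E2 in E1'. injection E1' as <-. exists u, u0'. split; auto. split; auto.
        eapply t_trans; [apply t_step; eauto|exact C'].
Qed.
Open Scope R_scope.

Lemma nth_mid_lt {A} (l1 l2 : list A) (a d : A) i : (i < length l1)%nat -> nth i (l1 ++ a :: l2) d = nth i l1 d.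
Proof. intro; now apply app_nth1. Qed.
Lemma nth_mid_eq {A} (l1 l2 : list A) (a d : A) : nth (length l1) (l1 ++ a :: l2) d = a.
Proof. rewrite app_nth2 by lia. now rewrite Nat.sub_diag. Qed.
Lemma nth_mid_gt {A} (l1 l2 : list A) (a d : A) k : nth (length l1 + S k) (l1 ++ a :: l2) d = nth k l2 d.
Proof. rewrite app_nth2 by lia. now replace (length l1 + S k - length l1)%nat with (S k) by lia. Qed.

Lemma nth_map_cons (c : nat) (l : list (list nat)) k : (k < length l)%nat ->
  nth k (map (cons c) l) [] = c :: nth k l [].
Proof. intro Hk. rewrite nth_indep with (d' := c :: []) by (now rewrite length_map). apply map_nth. Qed.

Lemma fsize_snoc s ts : fsize (s ++ [Node ts]) = (fsize s + S (fsize ts))%nat.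
Proof. unfold fsize. rewrite fverts_snoc, length_app. simpl. now rewrite length_map. Qed.

Lemma Forall_nth_le (l : list nat) m : (forall i, (i < length l)%nat -> (nth i l 0 <= m)%nat) -> Forall (fun a => (a <= m)%nat) l.
Proof.
  intro H. apply Forall_forall. intros y Hy. destruct (In_nth _ _ 0%nat Hy) as [i [Hi <-]]. auto.
Qed.

Lemma Forall_le_nth (l : list nat) m i : Forall (fun a => (a <= m)%nat) l -> (i < length l)%nat -> (nth i l 0 <= m)%nat.
Proof. intros H Hi. rewrite Forall_forall in H. apply H. now apply nth_In. Qed.

Lemma i_cases n1 n2 i : (i < n1 + S n2)%nat -> (i < n1)%nat \/ i = n1 \/ exists k, i = (n1 + S k)%nat /\ (k < n2)%nat.
Proof. intro. destruct (lt_eq_lt_dec i n1) as [[?|?]|?]; auto. right; right. exists (i - S n1)%nat. split; lia. Qed.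

Lemma points_char s ts M x1 m x2 :
  length x1 = fsize s -> length x2 = fsize ts ->
  order_points (fsize (s ++ [Node ts])) (forest_lt (s ++ [Node ts])) M (x1 ++ m :: x2) <->
  (m <= M)%nat /\ order_points (fsize s) (forest_lt s) m x1 /\ order_points (fsize ts) (forest_lt ts) m x2.
Proof.
  intros L1 L2.
  set (c := length s).
  assert (HV : fverts (s ++ [Node ts]) = fverts s ++ [c] :: map (cons c) (fverts ts)) by apply fverts_snoc.
  assert (N1 : length (fverts s) = fsize s) by reflexivity.
  assert (N2 : length (fverts ts) = fsize ts) by reflexivity.
  assert (Vlt : forall i, (i < fsize s)%nat -> nth i (fverts (s ++ [Node ts])) [] = nth i (fverts s) []).
  { intros i Hi. rewrite HV. apply nth_mid_lt. lia. }
  assert (Veq : nth (fsize s) (fverts (s ++ [Node ts])) [] = [c]).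
  { rewrite HV, <- N1. apply nth_mid_eq. }
  assert (Vgt : forall k, (k < fsize ts)%nat -> nth (fsize s + S k) (fverts (s ++ [Node ts])) [] = c :: nth k (fverts ts) []).
  { intros k Hk. rewrite HV, <- N1, nth_mid_gt. apply nth_map_cons. lia. }
  assert (Xlt : forall i, (i < fsize s)%nat -> nth i (x1 ++ m :: x2) 0%nat = nth i x1 0%nat).
  { intros i Hi. apply nth_mid_lt. lia. }
  assert (Xeq : nth (fsize s) (x1 ++ m :: x2) 0%nat = m).
  { rewrite <- L1. apply nth_mid_eq. }
  assert (Xgt : forall k, nth (fsize s + S k) (x1 ++ m :: x2) 0%nat = nth k x2 0%nat).
  { intros k. rewrite <- L1. apply nth_mid_gt. }
  assert (InV' : forall i, (i < fsize s)%nat -> In (nth i (fverts s) []) (fverts s)).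
  { intros; apply nth_In; lia. }
  assert (InT : forall k, (k < fsize ts)%nat -> In (nth k (fverts ts) []) (fverts ts)).
  { intros; apply nth_In; lia. }
  assert (HeadV' : forall i, (i < fsize s)%nat -> exists j u, nth i (fverts s) [] = j :: u /\ (j < c)%nat).
  { intros i Hi. apply head_s. auto. }
  rewrite fsize_snoc.
  unfold order_points. rewrite Forall_app. simpl. rewrite Forall_cons_iff.
  split.
  - intros [_ [[F1' [Fm F2']] C]].
    assert (Am1 : forall i, (i < fsize s)%nat -> (nth i x1 0 <= m)%nat).
    { intros i Hi. assert (H := C (fsize s) i ltac:(lia) ltac:(lia)). rewrite Xeq, Xlt in H by auto. apply H.
      unfold forest_lt. rewrite Veq. apply F3.
      - rewrite Vlt by auto. rewrite in_snoc. auto.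
      - rewrite Vlt by auto. destruct (HeadV' i Hi) as [j [u [-> Hj]]]. intro E; injection E; lia. }
    assert (Am2 : forall k, (k < fsize ts)%nat -> (nth k x2 0 <= m)%nat).
    { intros k Hk. assert (H := C (fsize s) (fsize s + S k)%nat ltac:(lia) ltac:(lia)). rewrite Xeq, Xgt in H. apply H.
      unfold forest_lt. rewrite Veq. apply F3.
      - rewrite Vgt by auto. rewrite in_snoc. eauto 10.
      - rewrite Vgt by auto. intro E; injection E as E. exfalso; exact (fverts_nonnil ts _ (InT k Hk) E). }
    split; auto. split; [split; auto; split|split; auto; split].
    + apply Forall_nth_le. rewrite L1. auto.
    + intros i j Hi Hj Hl. assert (H := C i j ltac:(lia) ltac:(lia)). rewrite !Xlt in H by auto. apply H.
      unfold forest_lt. rewrite !Vlt by auto. now apply F1.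
    + apply Forall_nth_le. rewrite L2. auto.
    + intros i j Hi Hj Hl. assert (H := C (fsize s + S i)%nat (fsize s + S j)%nat ltac:(lia) ltac:(lia)). rewrite !Xgt in H. apply H.
      unfold forest_lt. rewrite !Vgt by auto. now apply F2.
  - intros [Hm [[_ [F1' C1]] [_ [F2' C2]]]].
    split; [rewrite length_app; simpl; lia|].
    split.
    { split; [|split; [lia|]]; (eapply Forall_impl; [|eassumption]; simpl; intros; lia). }
    intros i j Hi Hj Hl. unfold forest_lt in Hl.
    destruct (i_cases _ _ _ Hi) as [Hi'|[->|[k [-> Hk]]]].
    + rewrite Vlt in Hl by auto. destruct (HeadV' i Hi') as [a [u [Ea Ha]]].
      apply F4 in Hl. rewrite Ea in Hl.
      destruct Hl as [E|[[A [B Cl]]|[u0 [u0' [E _]]]]].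
      * injection E; lia.
      * destruct (i_cases _ _ _ Hj) as [Hj'|[->|[k [-> Hk]]]].
        -- rewrite Vlt in B, Cl by auto. rewrite !Xlt by auto. apply C1; auto. unfold forest_lt. now rewrite Ea.
        -- rewrite Veq in B. destruct (head_s _ _ B) as [j0 [u1 [E Hj0]]]. injection E; lia.
        -- rewrite Vgt in B by auto. destruct (head_s _ _ B) as [j0 [u1 [E Hj0]]]. injection E; lia.
      * injection E; lia.
    + rewrite Xeq. destruct (i_cases _ _ _ Hj) as [Hj'|[->|[k [-> Hk]]]].
      * rewrite Xlt by auto. apply Forall_le_nth; auto; lia.
      * lia.
      * rewrite Xgt. apply Forall_le_nth; auto; lia.
    + rewrite Vgt in Hl by auto. apply F4 in Hl.
      destruct Hl as [E|[[A [B Cl]]|[u0 [u0' [E1 [E2 Cl]]]]]].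
      * injection E as E. exfalso; exact (fverts_nonnil ts _ (InT k Hk) E).
      * destruct (head_s _ _ A) as [j0 [u1 [E Hj0]]]. injection E; lia.
      * injection E1 as E1. subst u0.
        destruct (i_cases _ _ _ Hj) as [Hj'|[->|[k' [-> Hk']]]].
        -- rewrite Vlt in E2 by auto. destruct (HeadV' j Hj') as [a [u [Ea Ha]]].
           rewrite Ea in E2. injection E2; lia.
        -- rewrite Veq in E2. injection E2 as E2. subst u0'.
           apply llrel_in in Cl. destruct Cl as [_ Cl]. now apply fverts_nonnil in Cl.
        -- rewrite Vgt in E2 by auto. injection E2 as E2. subst u0'.
           rewrite !Xgt. apply C2; auto.
Qed.
Open Scope nat_scope.

Fixpoint sumN (a : nat -> nat) (M : nat) : nat :=
  match M with 0 => a 0 | S M' => sumN a M' + a (S M') end.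

Lemma is_card_iff {A} (P Q : A -> Prop) c : is_card P c -> (forall x, P x <-> Q x) -> is_card Q c.
Proof. intros [l [H1 [H2 H3]]] H. exists l. split; auto. split; auto. intro x. rewrite H2. apply H. Qed.

Lemma is_card_union {A} (P Q : A -> Prop) a b : is_card P a -> is_card Q b ->
  (forall x, P x -> Q x -> False) -> is_card (fun x => P x \/ Q x) (a + b).
Proof.
  intros [l1 [N1 [I1 L1]]] [l2 [N2 [I2 L2]]] D. exists (l1 ++ l2). split; [|split].
  - apply NoDup_app; auto. intros x H1 H2. apply (D x); [apply I1|apply I2]; auto.
  - intro x. rewrite in_app_iff, I1, I2. tauto.
  - rewrite length_app. lia.
Qed.

Lemma app_inj {A} (x1 y1 l l' : list A) : length x1 = length y1 -> x1 ++ l = y1 ++ l' -> x1 = y1 /\ l = l'.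
Proof.
  revert y1; induction x1 as [|a x1 IH]; intros [|b y1] L E; simpl in *; try discriminate; auto.
  injection E as -> E. destruct (IH y1 ltac:(lia) E). subst; auto.
Qed.

Lemma NoDup_flat_map' {A B} (f : A -> list B) (l : list A) : NoDup l -> (forall x, NoDup (f x)) ->
  (forall x y z, In x l -> In y l -> In z (f x) -> In z (f y) -> x = y) -> NoDup (flat_map f l).
Proof.
  induction l as [|a l IH]; intros N Nf D; simpl; [constructor|].
  inversion N; subst. apply NoDup_app; auto.
  - apply IH; auto. intros x y z Hx Hy; apply D; simpl; auto.
  - intros z Hz Hz'. apply in_flat_map in Hz' as [y [Hy Hzy]].
    assert (a = y) by (apply (D a y z); simpl; auto). subst; contradiction.
Qed.

Lemma length_flat_map_const {A B} (f : A -> list B) (l : list A) k : (forall x, length (f x) = k) ->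
  length (flat_map f l) = length l * k.
Proof. intro H. induction l; simpl; auto. rewrite length_app, H, IHl. lia. Qed.

Lemma is_card_prod (P1 P2 : list nat -> Prop) (m n1 a b : nat) :
  is_card P1 a -> is_card P2 b -> (forall x, P1 x -> length x = n1) ->
  is_card (fun z => exists x1 x2, P1 x1 /\ P2 x2 /\ z = x1 ++ m :: x2) (a * b).
Proof.
  intros [l1 [N1 [I1 L1]]] [l2 [N2 [I2 L2]]] Len.
  exists (flat_map (fun x1 => map (fun x2 => x1 ++ m :: x2) l2) l1). split; [|split].
  - apply NoDup_flat_map'; auto.
    + intro x. apply NoDup_map_NoDup_ForallPairs; auto.
      intros y y' _ _ E. apply app_inv_head in E. now injection E.
    + intros x y z Hx Hy Hzx Hzy. apply in_map_iff in Hzx as [x2 [<- _]].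
      apply in_map_iff in Hzy as [y2 [E _]].
      apply I1, Len in Hx. apply I1, Len in Hy.
      symmetry. apply (app_inj y x _ _ ltac:(lia) E).
  - intro z. rewrite in_flat_map. split.
    + intros [x1 [Hx1 Hz]]. apply in_map_iff in Hz as [x2 [<- Hx2]].
      exists x1, x2. rewrite <- I1, <- I2. auto.
    + intros [x1 [x2 [H1 [H2 ->]]]]. exists x1. split; [now apply I1|].
      apply in_map_iff. exists x2. split; auto. now apply I2.
  - rewrite (length_flat_map_const _ _ b). lia. intro. now rewrite length_map.
Qed.

Lemma card_split (P1 P2 : nat -> list nat -> Prop) n1 c1 c2 :
  (forall m, is_card (P1 m) (c1 m)) -> (forall m, is_card (P2 m) (c2 m)) ->
  (forall m x, P1 m x -> length x = n1) ->
  forall M, is_card (fun x => exists m x1 x2, (m <= M)%nat /\ P1 m x1 /\ P2 m x2 /\ x = x1 ++ m :: x2)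
                    (sumN (fun m => c1 m * c2 m) M).
Proof.
  intros H1 H2 Len M. induction M as [|M IH]; simpl.
  - eapply is_card_iff; [apply (is_card_prod (P1 0) (P2 0) 0 n1); eauto|].
    intro x. split.
    + intros [x1 [x2 H]]. exists 0%nat, x1, x2. auto.
    + intros [m [x1 [x2 [Hm H]]]]. assert (m = 0%nat) by lia. subst. eauto.
  - eapply is_card_iff; [apply is_card_union; [exact IH|apply (is_card_prod (P1 (S M)) (P2 (S M)) (S M) n1); eauto|]|].
    + intros x [m [x1 [x2 [Hm [A [B ->]]]]]] [y1 [y2 [A' [B' E]]]].
      apply Len in A. apply Len in A'.
      destruct (app_inj x1 y1 _ _ ltac:(lia) E) as [_ E2]. injection E2; lia.
    + intro x. split.
      * intros [[m [x1 [x2 [Hm H]]]]|[x1 [x2 H]]]; [exists m, x1, x2; split; [lia|auto]|exists (S M), x1, x2; auto].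
      * intros [m [x1 [x2 [Hm H]]]]. destruct (Nat.eq_dec m (S M)) as [->|Hne].
        -- right. exists x1, x2. auto.
        -- left. exists m, x1, x2. split; [lia|auto].
Qed.
Open Scope R_scope.

Lemma pow_diff (x y : R) q : 0 <= y <= x ->
  INR (S q) * y ^ q * (x - y) <= x ^ S q - y ^ S q <= INR (S q) * x ^ q * (x - y).
Proof.
  intros [Hy Hxy]. induction q as [|q IH].
  - simpl. lra.
  - assert (Hq : y ^ q <= x ^ q) by (apply pow_incr; lra).
    assert (Hy0 : 0 <= y ^ q) by (apply pow_le; lra).
    rewrite S_INR. replace (x ^ S (S q) - y ^ S (S q)) with (x * (x ^ S q - y ^ S q) + y ^ S q * (x - y)) by (simpl; ring).
    destruct IH as [IH1 IH2]. simpl pow in *.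
    assert (0 <= INR (S q)) by apply pos_INR.
    split.
    + assert (x * (INR (S q) * y ^ q * (x - y)) <= x * (x * x ^ q - y * y ^ q)) by (apply Rmult_le_compat_l; lra).
      assert (y * (INR (S q) * y ^ q * (x - y)) <= x * (INR (S q) * y ^ q * (x - y))).
      { apply Rmult_le_compat_r; [|lra]. apply Rmult_le_pos; [apply Rmult_le_pos|]; lra. }
      nra.
    + assert (x * (x * x ^ q - y * y ^ q) <= x * (INR (S q) * x ^ q * (x - y))) by (apply Rmult_le_compat_l; lra).
      assert (y * y ^ q * (x - y) <= x * x ^ q * (x - y)).
      { apply Rmult_le_compat_r; [lra|]. apply Rmult_le_compat; lra. }
      nra.
Qed.

Lemma sumS (f : nat -> R) M : sum_f_R0 f (S M) = sum_f_R0 f M + f (S M).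
Proof. reflexivity. Qed.

Definition Psum p M := sum_f_R0 (fun m => INR m ^ p) M.

Lemma powsum_bounds p M : INR M ^ S p <= INR (S p) * Psum p M <= INR (S M) ^ S p.
Proof.
  induction M as [|M IH].
  - unfold Psum; simpl sum_f_R0. change (INR 0) with 0. change (INR 1) with 1. rewrite pow1. destruct p; [simpl; lra|]. rewrite !pow_i by lia. pose proof (pos_INR (S (S p))); lra.
  - unfold Psum in *. rewrite sumS.
    assert (HM : 0 <= INR (S M)) by apply pos_INR.
    assert (HM1 : INR (S (S M)) = INR (S M) + 1) by apply S_INR.
    assert (HM0 : INR (S M) = INR M + 1) by apply S_INR.
    pose proof (pow_diff (INR (S M)) (INR M) p ltac:(split; [apply pos_INR|lra])) as [_ D1].
    pose proof (pow_diff (INR (S (S M))) (INR (S M)) p ltac:(lra)) as [D2 _].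
    rewrite Rmult_plus_distr_l. split.
    + rewrite HM0 in D1 |- *. replace (INR M + 1 - INR M) with 1 in D1 by ring. lra.
    + rewrite HM1 in D2 |- *. replace (INR (S M) + 1 - INR (S M)) with 1 in D2 by ring. lra.
Qed.

Lemma pow_1x (x : R) q : 0 <= x <= 1 -> (1 + x) ^ q <= 1 + x * INR q * 2 ^ q.
Proof.
  intros Hx. induction q as [|q IH].
  - simpl. lra.
  - rewrite S_INR. simpl pow.
    assert (H2 : 1 <= 2 ^ q) by (apply pow_R1_Rle; lra).
    assert (H0 : 0 <= INR q) by apply pos_INR.
    assert ((1 + x) * (1 + x) ^ q <= (1 + x) * (1 + x * INR q * 2 ^ q)) by (apply Rmult_le_compat_l; lra).
    assert (x * (x * INR q * 2 ^ q) <= 1 * (x * INR q * 2 ^ q)).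
    { apply Rmult_le_compat_r; [|lra]. apply Rmult_le_pos; [apply Rmult_le_pos|]; lra. }
    nra.
Qed.

Lemma INR_sumN a M : INR (sumN a M) = sum_f_R0 (fun m => INR (a m)) M.
Proof. induction M; simpl; auto. rewrite plus_INR, IHM. reflexivity. Qed.

Lemma sum_split_e (a : nat -> nat) v p M :
  sum_f_R0 (fun m => INR (a m)) M = v * Psum p M + sum_f_R0 (fun m => INR (a m) - v * INR m ^ p) M.
Proof. unfold Psum. induction M; simpl; [ring|]. rewrite IHM. ring. Qed.

Lemma sum_mono_nonneg (f : nat -> R) M N : (forall m, 0 <= f m) -> (M <= N)%nat ->
  sum_f_R0 f M <= sum_f_R0 f N.
Proof.
  intros Hf HMN. induction HMN; [lra|]. simpl. specialize (Hf (S m)). lra.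
Qed.

Lemma cesaro_pow (a : nat -> nat) p v :
  Un_cv (fun N => INR (a (S N)) / INR (S N) ^ p) v ->
  Un_cv (fun N => INR (sumN a (S N)) / INR (S N) ^ S p) (v / INR (S p)).
Proof.
  intros H eps Heps.
  set (q := S p).
  assert (H2q : 1 <= 2 ^ q) by (apply pow_R1_Rle; lra).
  set (eps1 := eps / (2 * 2 ^ q)).
  assert (Heps1 : 0 < eps1) by (unfold eps1; apply Rdiv_lt_0_compat; lra).
  destruct (H eps1 Heps1) as [N0 HN0].
  set (e := fun m => INR (a m) - v * INR m ^ p).
  assert (He : forall m, (m > N0)%nat -> Rabs (e m) <= eps1 * INR m ^ p).
  { intros m Hm. destruct m as [|N]; [lia|].
    specialize (HN0 N ltac:(lia)). unfold R_dist in HN0.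
    assert (Hp : 0 < INR (S N) ^ p) by (apply pow_lt; apply lt_0_INR; lia).
    unfold e. replace (INR (a (S N)) - v * INR (S N) ^ p) with (INR (S N) ^ p * (INR (a (S N)) / INR (S N) ^ p - v)) by (field; lra).
    rewrite Rabs_mult, (Rabs_right (INR (S N) ^ p)) by lra.
    rewrite Rmult_comm. apply Rmult_le_compat_r; lra. }
  set (K := sum_f_R0 (fun m => Rabs (e m)) N0).
  assert (HK0 : 0 <= K).
  { unfold K. apply cond_pos_sum. intro; apply Rabs_pos. }
  assert (HB : forall M, sum_f_R0 (fun m => Rabs (e m)) M <= K + eps1 * Psum p M).
  { intro M. assert (HP : forall M, 0 <= Psum p M).
    { intro M'. unfold Psum. apply cond_pos_sum. intro; apply pow_le, pos_INR. }
    induction M as [|M IH].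
    - simpl. assert (Rabs (e 0%nat) <= K).
      { unfold K. replace (Rabs (e 0%nat)) with (sum_f_R0 (fun m => Rabs (e m)) 0) by reflexivity.
        apply sum_mono_nonneg; [intro; apply Rabs_pos|lia]. }
      specialize (HP 0%nat). nra.
    - destruct (le_lt_dec (S M) N0) as [Hle|Hlt].
      + assert (sum_f_R0 (fun m => Rabs (e m)) (S M) <= K).
        { unfold K. apply sum_mono_nonneg; [intro; apply Rabs_pos|lia]. }
        specialize (HP (S M)). nra.
      + rewrite sumS. unfold Psum in *. rewrite sumS. specialize (He (S M) Hlt). nra. }
  destruct (INR_archimed (eps / 2) (Rabs v * 2 ^ q + K) ltac:(lra)) as [n Hn].
  exists n. intros N HN. unfold R_dist.
  set (Mr := INR (S N)).
  assert (HMr : 1 <= Mr) by (unfold Mr; rewrite S_INR; pose proof (pos_INR N); lra).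
  assert (HnM : INR n <= Mr) by (unfold Mr; apply le_INR; lia).
  set (Mq := Mr ^ q).
  assert (HMq : Mr <= Mq) by (unfold Mq, q; simpl; rewrite <- (Rmult_1_r Mr) at 1; apply Rmult_le_compat_l; [lra|apply pow_R1_Rle; lra]).
  set (A := Psum p (S N)).
  set (B := sum_f_R0 e (S N)).
  assert (HX : INR (sumN a (S N)) = v * A + B) by (rewrite INR_sumN; apply sum_split_e).
  rewrite HX.
  pose proof (powsum_bounds p (S N)) as [L1 L2]. fold A q Mr in L1, L2.
  fold Mr q in L1. fold Mq in L1.
  assert (Hq1 : 1 <= INR q) by (unfold q; rewrite S_INR; pose proof (pos_INR p); lra).
  assert (HSM : INR (S (S N)) = Mr + 1) by (unfold Mr; apply S_INR).
  rewrite HSM in L2.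
  assert (U1 : (Mr + 1) ^ q <= Mq * (1 + INR q * 2 ^ q / Mr)).
  { replace (Mr + 1) with (Mr * (1 + / Mr)) by (field; lra).
    rewrite Rpow_mult_distr. unfold Mq. apply Rmult_le_compat_l; [apply pow_le; lra|].
    assert (0 < / Mr <= 1) by (split; [apply Rinv_0_lt_compat; lra|rewrite <- Rinv_1; apply Rinv_le_contravar; lra]).
    pose proof (pow_1x (/ Mr) q ltac:(lra)). unfold Rdiv.
    replace (INR q * 2 ^ q * / Mr) with (/ Mr * INR q * 2 ^ q) by ring. lra. }
  assert (U2 : (Mr + 1) ^ q <= 2 ^ q * Mq).
  { unfold Mq. rewrite <- Rpow_mult_distr. apply pow_incr. lra. }
  assert (HMq0 : 0 < Mq) by lra.
  assert (D1 : 0 <= A / Mq - 1 / INR q).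
  { assert (1 / INR q <= A / Mq); [|lra].
    apply (Rmult_le_reg_r (INR q * Mq)); [nra|].
    replace (1 / INR q * (INR q * Mq)) with Mq by (field; lra).
    replace (A / Mq * (INR q * Mq)) with (INR q * A) by (field; lra). lra. }
  assert (D2 : A / Mq - 1 / INR q <= 2 ^ q / Mr).
  { apply (Rmult_le_reg_r (INR q * Mq)); [nra|].
    replace ((A / Mq - 1 / INR q) * (INR q * Mq)) with (INR q * A - Mq) by (field; lra).
    replace (2 ^ q / Mr * (INR q * Mq)) with (Mq * (INR q * 2 ^ q / Mr)) by (field; lra).
    lra. }
  assert (BB : Rabs B <= K + eps1 * A).
  { eapply Rle_trans; [apply sum_f_R0_triangle|]. apply HB. }
  assert (AA : A <= 2 ^ q * Mq).
  { assert (A <= INR q * A) by (assert (0 <= A) by (unfold A, Psum; apply cond_pos_sum; intro; apply pow_le, pos_INR); nra). lra. }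
  replace ((v * A + B) / Mq - v / INR q) with (v * (A / Mq - 1 / INR q) + B / Mq) by (field; lra).
  eapply Rle_lt_trans; [apply Rabs_triang|].
  rewrite Rabs_mult, (Rabs_right (A / Mq - 1 / INR q)) by lra.
  replace (Rabs (B / Mq)) with (Rabs B * / Mq) by (unfold Rdiv; rewrite Rabs_mult, Rabs_inv, (Rabs_right Mq) by lra; reflexivity).
  assert (T1 : Rabs v * (A / Mq - 1 / INR q) <= Rabs v * 2 ^ q / Mr).
  { replace (Rabs v * 2 ^ q / Mr) with (Rabs v * (2 ^ q / Mr)) by (unfold Rdiv; ring). apply Rmult_le_compat_l; [apply Rabs_pos|]. exact D2. }
  assert (T2 : Rabs B * / Mq <= K / Mr + eps / 2).
  { apply (Rmult_le_reg_r Mq); [lra|]. rewrite Rmult_assoc, Rinv_l, Rmult_1_r by lra.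
    assert (K <= K / Mr * Mq).
    { unfold Rdiv. rewrite Rmult_assoc. rewrite <- (Rmult_1_r K) at 1. apply Rmult_le_compat_l; [lra|].
      apply (Rmult_le_reg_l Mr); [lra|]. rewrite <- Rmult_assoc, Rinv_r, Rmult_1_l; lra. }
    assert (eps1 * A <= eps / 2 * Mq).
    { replace (eps / 2 * Mq) with (eps1 * (2 ^ q * Mq)) by (unfold eps1; field; lra).
      apply Rmult_le_compat_l; lra. }
    lra. }
  assert (T3 : Rabs v * 2 ^ q / Mr + K / Mr < eps / 2).
  { replace (Rabs v * 2 ^ q / Mr + K / Mr) with ((Rabs v * 2 ^ q + K) / Mr) by (field; lra).
    apply (Rmult_lt_reg_r Mr); [lra|]. replace ((Rabs v * 2 ^ q + K) / Mr * Mr) with (Rabs v * 2 ^ q + K) by (field; lra).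
    nra. }
  lra.
Qed.
Open Scope R_scope.

Lemma split_len (x : list nat) n1 n2 : length x = (n1 + S n2)%nat ->
  exists x1 m x2, x = x1 ++ m :: x2 /\ length x1 = n1 /\ length x2 = n2.
Proof.
  revert x; induction n1 as [|n1 IH]; intros x Hx.
  - destruct x as [|m x2]; simpl in Hx; [lia|]. exists [], m, x2. simpl. split; auto.
  - destruct x as [|a x]; simpl in Hx; [lia|]. destruct (IH x ltac:(lia)) as [x1 [m [x2 [-> [L1 L2]]]]].
    exists (a :: x1), m, x2. simpl. auto.
Qed.

Lemma step s ts v1 v2 :
  order_volume (fsize s) (forest_lt s) v1 -> order_volume (fsize ts) (forest_lt ts) v2 ->
  order_volume (fsize (s ++ [Node ts])) (forest_lt (s ++ [Node ts])) (v1 * v2 / INR (fsize (s ++ [Node ts]))).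
Proof.
  intros [c1 [Hc1 L1]] [c2 [Hc2 L2]].
  exists (fun M => sumN (fun m => (c1 m * c2 m)%nat) M). split.
  - intro M. eapply is_card_iff.
    + apply (card_split (fun m => order_points (fsize s) (forest_lt s) m)
                        (fun m => order_points (fsize ts) (forest_lt ts) m) (fsize s) c1 c2 Hc1 Hc2).
      intros m x [Hl _]. exact Hl.
    + intro x. split.
      * intros [m [x1 [x2 [Hm [P1 [P2 ->]]]]]]. apply points_char.
        -- apply P1. -- apply P2. -- auto.
      * intro Hx. pose proof (proj1 Hx) as Hl. rewrite fsize_snoc in Hl.
        destruct (split_len x _ _ Hl) as [x1 [m [x2 [-> [Lx1 Lx2]]]]].
        apply points_char in Hx; auto. destruct Hx as [Hm [P1 P2]]. exists m, x1, x2. auto.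
  - rewrite fsize_snoc. replace (fsize s + S (fsize ts))%nat with (S (fsize s + fsize ts)) by lia.
    apply cesaro_pow.
    eapply Un_cv_ext; [|apply (CV_mult _ _ _ _ L1 L2)].
    intro N. cbv beta. rewrite mult_INR, pow_add.
    assert (0 < INR (S N) ^ fsize s) by (apply pow_lt, lt_0_INR; lia).
    assert (0 < INR (S N) ^ fsize ts) by (apply pow_lt, lt_0_INR; lia).
    field. lra.
Qed.

Lemma fold_mult_app (l1 l2 : list R) : fold_right Rmult 1 (l1 ++ l2) = fold_right Rmult 1 l1 * fold_right Rmult 1 l2.
Proof. induction l1; simpl; [ring|]. rewrite IHl1. ring. Qed.

Lemma base_vol : order_volume 0 (forest_lt []) 1.
Proof.
  exists (fun _ => 1%nat). split.
  - intro M. exists [[]]. split; [repeat constructor; simpl; tauto|split; auto].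
    intro x. simpl. split.
    + intros [<-|[]]. split; auto. split; auto. intros; lia.
    + intros [Hl _]. destruct x; simpl in Hl; [auto|lia].
  - intros eps Heps. exists 0%nat. intros n _. unfold R_dist. simpl.
    replace (1 / 1 - 1) with 0 by field. rewrite Rabs_R0. lra.
Qed.

Theorem mainTheorem9 (taus : list (list ptree)) (fs : list R) :
  length fs = length taus ->
  (forall j, (j < length taus)%nat -> planar_fact (nth j taus nil) (nth j fs 0)) ->
  planar_fact (map Node taus)
    (fold_right Rmult 1
       (map (fun j => INR (fsize (firstn (S j) (map Node taus))))
            (seq 0 (length taus)))
     * fold_right Rmult 1 fs).
Proof.
  revert fs. induction taus as [|t taus IH] using rev_ind; intros fs Hlen Hf.
  - destruct fs; simpl in Hlen; [|lia]. simpl.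
    exists 1. split; [exact base_vol|]. split; [lra|]. field.
  - rewrite length_app in Hlen. simpl in Hlen.
    destruct (exists_last (l := fs)) as [fs' [f ->]]; [intro E; subst; simpl in Hlen; lia|].
    rewrite length_app in Hlen. simpl in Hlen.
    assert (Hl' : length fs' = length taus) by lia.
    assert (IH' := IH fs' Hl').
    destruct IH' as [v1 [V1 [Nv1 E1]]].
    { intros j Hj. specialize (Hf j ltac:(rewrite length_app; simpl; lia)).
      rewrite !app_nth1 in Hf by lia. exact Hf. }
    assert (Hlast := Hf (length taus) ltac:(rewrite length_app; simpl; lia)).
    rewrite app_nth2, Nat.sub_diag in Hlast by lia. rewrite app_nth2 in Hlast by lia.
    rewrite Hl', Nat.sub_diag in Hlast. simpl in Hlast.
    destruct Hlast as [v2 [V2 [Nv2 E2]]].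
    rewrite map_app.
    pose proof (step _ _ _ _ V1 V2) as V.
    set (n := fsize (map Node taus ++ [Node t])) in *.
    assert (Hn : 0 < INR n).
    { apply lt_0_INR. unfold n. rewrite fsize_snoc. lia. }
    exists (v1 * v2 / INR n). split; [exact V|]. split.
    { unfold Rdiv. intro E. apply Rmult_integral in E as [E|E].
      - apply Rmult_integral in E as [E|E]; contradiction.
      - apply Rinv_neq_0_compat in E; lra. }
    rewrite length_app. cbn [length]. rewrite Nat.add_1_r, seq_S, map_app, !fold_mult_app. cbn [map fold_right].
    rewrite firstn_all2 by (rewrite length_app, length_map; simpl; lia). fold n.
    rewrite (map_ext_in _ (fun j => INR (fsize (firstn (S j) (map Node taus))))) in *.
    2:{ intros j Hj. apply in_seq in Hj. rewrite firstn_app, length_map.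
        replace (S j - length taus)%nat with 0%nat by lia. simpl. now rewrite app_nil_r. }
    set (P := fold_right Rmult 1 (map (fun j => INR (fsize (firstn (S j) (map Node taus)))) (seq 0 (length taus)))) in *.
    set (Q := fold_right Rmult 1 fs') in *.
    replace (P * (INR n * 1) * (Q * (f * 1))) with ((P * Q) * INR n * f) by ring.
    rewrite E1, E2. field. split; lra.
Qed.
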